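(* Let $(g,\gamma)$ be a construction pair on an abelian group $(X,+)$. Then $(g^{-1},g\circ\gamma)$ is a construction pair on $(X,+)$, where $(g\circ\gamma)(x,y)=g(\gamma(x,y))$.
   Context: A map $\gamma:X\times X\to X$ is symmetric if $\gamma(x,y)=\gamma(y,x)$, alternating if $\gamma(x,x)=0$, biadditive if additive in each argument. A construction pair on $(X,+)$ is a pair $(g,\gamma)$ where $g$ is a permutation of $X$ and $\gamma:X\times X\to X$ is symmetric, alternating and biadditive, such that for all $x,y,z\in X$: (C1) $g^{-1}(g(x)+g(y))=x+y+\gamma(x,y)+g^{-1}(\gamma(x,y))+g^{-2}(\gamma(x,y))$; (C2) $\gamma(\gamma(x,y),z)=0$; (C3) $g^{-1}(\gamma(x,y))=\gamma(g(x),y)$. *)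

(* Defs.v *)
From mathcomp Require Import all_boot all_algebra.
Set Implicit Arguments. Unset Strict Implicit. Unset Printing Implicit Defensive.
Import GRing.Theory.
Local Open Scope ring_scope.

(* A permutation g of X is represented by the function g together with its
   two-sided inverse gi (gi = g^{-1}). *)
Definition is_inverse (X : Type) (g gi : X -> X) : Prop :=
  cancel g gi /\ cancel gi g.

Definition symmetric_map (X : zmodType) (gam : X -> X -> X) : Prop :=
  forall x y, gam x y = gam y x.

Definition alternating_map (X : zmodType) (gam : X -> X -> X) : Prop :=
  forall x, gam x x = 0.

Definition biadditive (X : zmodType) (gam : X -> X -> X) : Prop :=
  (forall x y z, gam (x + y) z = gam x z + gam y z) /\
  (forall x y z, gam x (y + z) = gam x y + gam x z).

Definition construction_pair (X : zmodType) (g gi : X -> X)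
    (gam : X -> X -> X) : Prop :=
  is_inverse g gi /\
  symmetric_map gam /\ alternating_map gam /\ biadditive gam /\
  (forall x y, gi (g x + g y) = x + y + gam x y + gi (gam x y) + gi (gi (gam x y))) /\
  (forall x y z, gam (gam x y) z = 0) /\
  (forall x y, gi (gam x y) = gam (g x) y).

(* Main.v *)
Require Import Defs.
From mathcomp Require Import all_boot all_algebra.
Local Open Scope ring_scope.
Import GRing.Theory.

Theorem mainTheorem19 (X : zmodType) (g gi : X -> X) (gam : X -> X -> X) :
  construction_pair g gi gam ->
  construction_pair gi g (fun x y => g (gam x y)).
Proof.
move=> [[gK giK] [sym [alt [[bl br] [C1 [C2 C3]]]]]].
have g0l : forall y, gam 0 y = 0.
  move=> y; have h := bl 0 0 y; rewrite addr0 in h.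
  by apply: (@addrI _ (gam 0 y)); rewrite addr0 -h.
have g0r : forall y, gam y 0 = 0 by move=> y; rewrite sym g0l.
have C2r : forall x y z, gam z (gam x y) = 0 by move=> x y z; rewrite sym C2.
have gi0 : gi 0 = 0 by have := C3 0 0; rewrite g0l g0r.
have tw : forall x y, gam x y + gam x y = 0.
  move=> x y; have h := alt (x + y).
  rewrite bl !br !alt add0r addr0 in h.
  by rewrite {2}sym.
have gsym : forall x y, gam (g x) y = gam x (g y).
  by move=> x y; rewrite -C3 sym C3 sym.
have gig : forall x y, g (gam x y) = gam (gi x) y.
  by move=> x y; rewrite -{1}(giK x) -C3 giK.
have gi2 : forall x y, gam (gi x) y = gam x (gi y).
  by move=> x y; rewrite -{1}(giK y) -gsym giK.
have giim : forall u p q, gi (u + gam p q) = gi u + gi (gam p q).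
  move=> u p q.
  have := C1 (gi u) (gi (gam p q)); rewrite !giK => ->.
  by rewrite C3 C2r gi0 gi0 !addr0.
split; first by [].
split; first by move=> x y; rewrite sym.
split; first by move=> x; rewrite gig; have := C3 (gi x) (gi x); rewrite alt gi0 giK sym => <-.
split.
  split=> x y z; rewrite gig.
    have := C1 (gi x) (gi y); rewrite !giK => ->.
    by rewrite !bl !gi2 ?C2 ?C2r !addr0 !gig !gi2.
  by rewrite br !gig.
split.
  move=> x y.
  apply: (can_inj giK); rewrite gK.
  have [a ->] : exists a, x = g a by exists (gi x); rewrite giK.
  have [b ->] : exists b, y = g b by exists (gi y); rewrite giK.
  rewrite ?gK ?gig ?gK !giim C1 !C3 ?giK -?gsym ?giK.
  rewrite -!addrA; congr (a + _); rewrite -[LHS]addr0; congr (b + _); apply/esym.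
  by rewrite [X in _ + (_ + X)]addrA tw add0r [X in _ + X]addrA tw add0r tw.
split; first by move=> x y z; rewrite gig gK C2.
by move=> x y; rewrite -gig.
Qed.
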